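(* Let $(X_i)_{i\in\mathbb{Z}}$ be a sequence (not necessarily stationary) of square-integrable random variables adapted to a nondecreasing filtration $(\mathcal{F}_i)_{i\in\mathbb{Z}}$. For $n\ge 1$ let $S_n=\sum_{k=1}^n X_k$ and $M_n=\max_{1\le i\le n}|S_i|$. Then for every $n\ge1$, $$\mathbb{E}(M_n)^2 \le 4\sum_{k=1}^n \mathbb{E}(X_k^2) + 12\sum_{k=1}^{n-1}\big\|X_k\,\mathbb{E}(S_n-S_k\mid\mathcal{F}_k)\big\|_1 .$$
   Context: $\|\cdot\|_1$ denotes the $\mathbb{L}_1$ norm, $\|Y\|_1=\mathbb{E}|Y|$. *)

(* Defs.v *)
From HB Require Import structures.
From mathcomp Require Import all_boot all_order all_algebra.
From mathcomp Require Import all_classical all_reals all_analysis.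
Set Implicit Arguments. Unset Strict Implicit. Unset Printing Implicit Defensive.
Import Order.TTheory GRing.Theory Num.Theory.
Local Open Scope classical_set_scope.
Local Open Scope ring_scope.

Definition sub_sigma_algebra d (T : measurableType d) (G : set (set T)) :=
  sigma_algebra setT G /\ G `<=` measurable.

Definition G_measurable d (T : measurableType d) (R : realType)
  (G : set (set T)) (f : T -> R) :=
  forall B : set R, measurable B -> G (f @^-1` B).

Definition filtration d (T : measurableType d) (F : int -> set (set T)) :=
  (forall i, sub_sigma_algebra (F i)) /\ (forall i j, (i <= j)%R -> F i `<=` F j).

Definition is_cond_exp d (T : measurableType d) (R : realType)
  (P : probability T R) (G : set (set T)) (Y Z : T -> R) :=
  [/\ G_measurable G Z, P.-integrable setT (EFin \o Z) &
      forall A, G A -> (\int[P]_(x in A) (Z x)%:E = \int[P]_(x in A) (Y x)%:E)%E].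

Definition psum d (T : measurableType d) (R : realType) (X : int -> T -> R)
  (n : nat) (x : T) : R := \sum_(1 <= k < n.+1) X (k%:Z) x.

Definition pmax d (T : measurableType d) (R : realType) (X : int -> T -> R)
  (n : nat) (x : T) : R := \big[Num.max/0]_(1 <= i < n.+1) `|psum X i x|.

(* Main.v *)
Require Import Defs.
From HB Require Import structures.
From mathcomp Require Import all_boot all_order all_algebra.
From mathcomp Require Import all_classical all_reals all_analysis.
From mathcomp Require Import ring lra.
Import Order.TTheory GRing.Theory Num.Theory.
Local Open Scope classical_set_scope.
Local Open Scope ring_scope.

(* Proof strategy: a pathwise inequality
   M_n^2 <= 4 sum X_k^2 + sum_j W_j (S_n - S_j) with |W_j| <= 8 |X_j|, W_j F_j-measurable,
   then E[W_j (S_n - S_j)] = E[W_j Z_j] by approximating W_j with G-simple functions. *)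

Set Implicit Arguments. Unset Strict Implicit.

Section Pw.
Context {R : realType}.
Definition cl (m s : R) := if s < - (m / 4) then - (m / 4) else if m / 4 < s then m / 4 else s.
Definition Phi (m s : R) := 3 / 2 * m ^+ 2 - 4 * s ^+ 2 + 8 * (s - cl m s) ^+ 2.
Definition Gf (m s : R) := 8 * s - 16 * cl m s.

Lemma Phi_ge (m s : R) : 0 <= m -> `|s| <= m -> m ^+ 2 <= Phi m s.
Proof.
move=> m0 sm; rewrite /Phi /cl.
move: sm; rewrite ler_norml => /andP[h1 h2].
case: ltP => h3; first by have := sqr_ge0 (2*s+m); nra.
case: ltP => h4; first by have := sqr_ge0 (2*s-m); nra.
nra.
Qed.

Lemma step_core (m s x m' : R) : 0 <= m -> - m <= s -> s <= m ->
  (m' = m /\ - m <= s + x /\ s + x <= m) \/ (m' = s + x /\ m < m') \/ (m' = - (s + x) /\ m < m') ->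
  Phi m' (s + x) <= Phi m s + Gf m s * x + 4 * x ^+ 2 /\
  Gf m' (s + x) - Gf m s <= 8 * `|x| /\ Gf m s - Gf m' (s + x) <= 8 * `|x|.
Proof.
move=> m0 h1 h2 hc.
have hx := sqr_ge0 x.
rewrite /Phi /Gf /cl.
case: (ler0P x) => hx0;
case: hc => [[-> [h5 h6]]|[[-> h5]|[-> h5]]];
(case: ltP => h3; [|case: ltP => h4]);
(case: ltP => h7; [|case: ltP => h8]);
try (split; [|split]; [nra|nra|nra]).
Qed.

Lemma clE (m s : R) : 0 <= m -> Num.max (- (m / 4)) (Num.min s (m / 4)) = cl m s.
Proof.
move=> m0; rewrite /cl minEle maxEle.
case: (lerP s (m/4)) => h1; case: (ltrP s (-(m/4))) => h2;
  by repeat (case: ifPn => h; rewrite -?ltNge -?leNgt in h); lra.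
Qed.

Lemma step (m s x : R) : 0 <= m -> `|s| <= m ->
  Phi (Num.max m `|s + x|) (s + x) <= Phi m s + Gf m s * x + 4 * x ^+ 2 /\
  `|Gf (Num.max m `|s + x|) (s + x) - Gf m s| <= 8 * `|x|.
Proof.
move=> m0; rewrite ler_norml => /andP[h1 h2].
have H : forall m', (m' = m /\ - m <= s + x /\ s + x <= m) \/ (m' = s + x /\ m < m') \/ (m' = - (s + x) /\ m < m') ->
  Phi m' (s + x) <= Phi m s + Gf m s * x + 4 * x ^+ 2 /\
  `|Gf m' (s + x) - Gf m s| <= 8 * `|x|.
  move=> m' hc; have [A [B C]] := @step_core m s x m' m0 h1 h2 hc.
  split => //; rewrite ler_norml; apply/andP; split; lra.
apply: H.
case: (lerP m `|s + x|) => hm.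
  case: (ler0P (s + x)) hm => hsx hm.
    case: (ltP m (- (s + x))) => hh; first by right; right.
    left; split; first lra. split; lra.
  case: (ltP m (s + x)) => hh; first by right; left.
  left; split; first lra. split; lra.
left; split => //.
move: hm; rewrite ltr_norml => /andP[? ?]; split; lra.
Qed.
End Pw.


Section Path.
Context d (T : measurableType d) (R : realType) (X : int -> T -> R).

Lemma psum0 x : psum X 0 x = 0.
Proof. by rewrite /psum big_geq. Qed.

Lemma psumS k x : psum X k.+1 x = psum X k x + X k.+1%:Z x.
Proof. by rewrite /psum big_nat_recr. Qed.

Lemma pmax0 x : pmax X 0 x = 0.
Proof. by rewrite /pmax big_geq. Qed.

Lemma bigmax_gen (r : seq nat) (F : nat -> R) y : 0 <= y ->
  \big[Num.max/y]_(i <- r) F i = Num.max (\big[Num.max/0]_(i <- r) F i) y.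
Proof.
move=> y0; elim: r => [|i r IH]; first by rewrite !big_nil; apply/esym/max_r.
by rewrite !big_cons IH maxA.
Qed.

Lemma pmaxS k x : pmax X k.+1 x = Num.max (pmax X k x) `|psum X k.+1 x|.
Proof.
rewrite /pmax.
have -> : index_iota 1 k.+2 = rcons (index_iota 1 k.+1) k.+1.
  by rewrite /index_iota !subSS !subn0 -cats1 -[in LHS](addn1 k) iotaD add1n.
rewrite big_rcons_op /= (max_l (normr_ge0 _)) bigmax_gen //.
Qed.

Lemma pmax_ge k x : 0 <= pmax X k x /\ `|psum X k x| <= pmax X k x.
Proof.
elim: k => [|k [h1 h2]]; first by rewrite pmax0 psum0 normr0.
rewrite pmaxS; split; first by rewrite le_max h1.
by rewrite le_max lexx orbT.
Qed.

Definition gg k x := Gf (pmax X k x) (psum X k x).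
Definition WW k x := gg k x - gg k.-1 x.

Lemma gg0 x : gg 0 x = 0.
Proof. by rewrite /gg pmax0 psum0 /Gf /cl !mul0r oppr0 ltxx !mulr0 subr0. Qed.

Lemma WW_le k x : `|WW k.+1 x| <= 8 * `|X k.+1%:Z x|.
Proof.
have [h1 h2] := pmax_ge k x.
rewrite /WW /gg /= pmaxS psumS.
exact: (@step _ (pmax X k x) (psum X k x) (X k.+1%:Z x) h1 h2).2.
Qed.

Lemma Phi00 : Phi 0 0 = 0 :> R.
Proof. rewrite /Phi /cl !mul0r oppr0 ltxx; ring. Qed.

Lemma path_inv N x k : (k <= N)%N ->
  Phi (pmax X k x) (psum X k x) + gg k x * (psum X N x - psum X k x) <=
  4 * (\sum_(1 <= i < k.+1) X i%:Z x ^+ 2) +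
  \sum_(1 <= j < k.+1) WW j x * (psum X N x - psum X j x).
Proof.
elim: k => [_|k IH hk].
  rewrite gg0 pmax0 psum0 !big_geq // Phi00 mul0r; lra.
have {}IH := IH (ltnW hk).
rewrite !(big_nat_recr k.+1) //=.
have [h1 h2] := pmax_ge k x.
have [A _] := @step _ (pmax X k x) (psum X k x) (X k.+1%:Z x) h1 h2.
rewrite -psumS -pmaxS in A.
have -> : WW k.+1 x = gg k.+1 x - gg k x by [].
move: IH A; rewrite /gg psumS.
set a := X _ x; set P1 := Phi _ _; set P0 := Phi _ _.
set g1 := Gf _ _; set g0 := Gf _ _.
move=> IH A.
nra.
Qed.

Lemma pathwise N x :
  pmax X N x ^+ 2 <= 4 * (\sum_(1 <= i < N.+1) X i%:Z x ^+ 2) +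
  \sum_(1 <= j < N) WW j x * (psum X N x - psum X j x).
Proof.
have [h1 h2] := pmax_ge N x.
have := @path_inv N x N (leqnn N).
rewrite subrr mulr0 addr0.
case: N h1 h2 => [|N] h1 h2.
  by rewrite !big_geq // pmax0 expr0n /= mulr0 addr0; lra.
rewrite [X in _ <= _ + X]big_nat_recr //= subrr mulr0 addr0.
have := @Phi_ge _ _ _ h1 h2; lra.
Qed.
End Path.


Section Meas.
Context d (T : measurableType d) (R : realType) (X : int -> T -> R) (j : nat).
Hypothesis mX : forall i : nat, (1 <= i <= j)%N -> measurable_fun setT (X i%:Z).

Lemma mpsum k : (k <= j)%N -> measurable_fun setT (psum X k).
Proof.
elim: k => [_|k IH hk].
  by rewrite (_ : psum X 0 = cst 0); [exact: measurable_cst|apply/funext => x; rewrite psum0].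
rewrite (_ : psum X k.+1 = psum X k \+ X k.+1%:Z); last by apply/funext => x; rewrite psumS.
by apply: measurable_realfun.measurable_funD; [apply: IH; exact: ltnW|apply: mX; rewrite hk].
Qed.

Lemma mpmax k : (k <= j)%N -> measurable_fun setT (pmax X k).
Proof.
elim: k => [_|k IH hk].
  by rewrite (_ : pmax X 0 = cst 0); [exact: measurable_cst|apply/funext => x; rewrite pmax0].
rewrite (_ : pmax X k.+1 = pmax X k \max (Num.norm \o psum X k.+1)); last by apply/funext => x; rewrite pmaxS.
apply: measurable_realfun.measurable_maxr; first by apply: IH; exact: ltnW.
by apply: measurableT_comp => //; exact: mpsum.
Qed.

Lemma mgg k : (k <= j)%N -> measurable_fun setT (gg X k).
Proof.
move=> hk.
rewrite (_ : gg X k = (fun x => 8 * psum X k x) \- (fun x => 16 * ((fun x => - (pmax X k x / 4)) \max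
   ((psum X k) \min (fun x => pmax X k x / 4))) x)); last first.
  apply/funext => x; rewrite /gg /Gf -clE //=; exact: (pmax_ge X k x).1.
apply: measurable_realfun.measurable_funB.
  by apply: measurable_realfun.measurable_funM; [exact: measurable_cst|exact: mpsum].
apply: measurable_realfun.measurable_funM; first exact: measurable_cst.
apply: measurable_realfun.measurable_maxr.
  apply: measurable_realfun.measurable_funN; apply: measurable_realfun.measurable_funM; [exact: mpmax|exact: measurable_cst].
apply: measurable_realfun.measurable_minr; first exact: mpsum.
apply: measurable_realfun.measurable_funM; [exact: mpmax|exact: measurable_cst].
Qed.

Lemma mWW k : (k <= j)%N -> measurable_fun setT (WW X k).
Proof.
move=> hk; apply: measurable_realfun.measurable_funB; first exact: mgg.
by apply: mgg; apply: leq_trans hk; exact: leq_pred.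
Qed.
End Meas.

Section Galias.
Context d (T : measurableType d) (R : realType).

Lemma Gmeas_alias (G : set (set T)) (f : T -> R) : sigma_algebra setT G ->
  G_measurable G f <-> measurable_fun (setT : set (g_sigma_algebraType G)) f.
Proof.
move=> sG; split.
  move=> Gf _ B mB; rewrite setTI.
  by rewrite /measurable /= (sigma_algebra_id sG); exact: Gf.
move=> mf B mB; have := mf measurableT B mB.
by rewrite setTI /measurable /= (sigma_algebra_id sG).
Qed.

Lemma Gmeas_meas (G : set (set T)) (f : T -> R) : G `<=` measurable ->
  G_measurable G f -> measurable_fun setT f.
Proof. by move=> GM Gf _ B mB; rewrite setTI; apply: GM; exact: Gf. Qed.
End Galias.

Import numFieldNormedType.Exports.

Section Approx.
Context d (T : measurableType d) {R : realType} (W : T -> R).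

Definition hh (K : nat) : R := K.+1%:R^-1.
Definition aa (K i : nat) : R := i%:R * hh K - K.+1%:R.
Definition NN (K : nat) : nat := (2 * K.+1 ^ 2)%N.
Definition AA (K i : nat) : set T := W @^-1` `[aa K i, aa K i + hh K[.
Definition WK (K : nat) (x : T) : R := \sum_(0 <= i < NN K) aa K i * \1_(AA K i) x.

Lemma hh_gt0 K : 0 < hh K. Proof. by rewrite /hh invr_gt0 ltr0Sn. Qed.
Lemma hh_le1 K : hh K <= 1.
Proof. by rewrite /hh invf_le1 ?ltr0Sn // ler1n. Qed.

Lemma aaS K i : aa K i.+1 = aa K i + hh K.
Proof. rewrite /aa -addn1 natrD; ring. Qed.

Lemma inAA K i x : (x \in AA K i) = (aa K i <= W x < aa K i + hh K).
Proof.
rewrite /AA; apply/idP/idP; first by rewrite in_setE /= in_itv.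
by move=> h; rewrite in_setE /= in_itv.
Qed.

Lemma AA_uniq K i j x : x \in AA K i -> x \in AA K j -> i = j.
Proof.
rewrite !inAA => /andP[h1 h2] /andP[h3 h4].
have hp := hh_gt0 K.
have hij : forall i j : nat, (i < j)%N -> (i%:R + 1 <= j%:R :> R).
  by move=> ? ? ?; rewrite natr1 ler_nat.
case: (ltngtP i j) => // hij'; have := hij _ _ hij'; clear hij hij'; rewrite /aa in h1 h2 h3 h4 => H; exfalso; nra.
Qed.

Lemma WK_eq K x i : (i < NN K)%N -> x \in AA K i -> WK K x = aa K i.
Proof.
move=> hi hx.
rewrite /WK (bigD1_seq i) ?mem_index_iota ?iota_uniq //=.
rewrite indicE hx mulr1 big1 ?addr0 // => j hj.
rewrite indicE; case: (boolP (x \in AA K j)) => hxj; last by rewrite mulr0.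
by rewrite (AA_uniq hxj hx) eqxx in hj.
Qed.

Lemma WK_cases K x : WK K x = 0 \/
  exists i, [/\ (i < NN K)%N, x \in AA K i & WK K x = aa K i].
Proof.
case: (pselect (exists i, (i < NN K)%N /\ x \in AA K i)) => [[i [hi hx]]|hn].
  by right; exists i; split => //; exact: WK_eq.
left; rewrite /WK big1_seq // => j /andP[_ hj].
rewrite indicE; case: (boolP (x \in AA K j)) => hxj; last by rewrite mulr0.
by exfalso; apply: hn; exists j; split => //; rewrite mem_index_iota in hj.
Qed.

Lemma aa0 K : aa K 0 = - K.+1%:R.
Proof. by rewrite /aa mul0r sub0r. Qed.

Lemma aaN K : aa K (NN K) = K.+1%:R.
Proof.
rewrite /aa /NN /hh natrM natrX.
have h : K.+1%:R != 0 :> R by rewrite pnatr_eq0.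
field; by rewrite -natr1 addrC in h.
Qed.

Lemma find_itv K (w : R) n : aa K 0 <= w -> w < aa K n ->
  exists i, (i < n)%N /\ aa K i <= w < aa K i + hh K.
Proof.
move=> h0; elim: n => [|n IH] hn; first by exfalso; move: hn h0; rewrite aa0; lra.
case: (ltrP w (aa K n)) => h.
  by have [i [hi hw]] := IH h; exists i; split => //; exact: ltnW.
by exists n; split => //; rewrite h -aaS.
Qed.

Lemma WK_exists K x : - K.+1%:R <= W x < K.+1%:R ->
  exists i, (i < NN K)%N /\ x \in AA K i.
Proof.
move=> /andP[h1 h2].
have := @find_itv K (W x) (NN K); rewrite aa0 aaN => /(_ h1 h2) [i [hi hw]].
by exists i; split => //; rewrite inAA.
Qed.

Lemma WK_bound K x : `|WK K x| <= `|W x| + 1.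
Proof.
have := hh_le1 K; have := hh_gt0 K.
case: (WK_cases K x) => [->|[i [_ hx ->]]]; first by rewrite normr0 => _ _; have := normr_ge0 (W x); lra.
move: hx; rewrite inAA => /andP[h1 h2] ? ?.
rewrite ler_norml; apply/andP; split.
  case: (ler0P (W x)) => hw; lra.
case: (ler0P (W x)) => hw; lra.
Qed.

Lemma WK_close K x : - K.+1%:R <= W x < K.+1%:R -> `|W x - WK K x| <= hh K.
Proof.
move=> hr; have [i [hi hx]] := WK_exists hr.
rewrite (WK_eq hi hx).
move: hx; rewrite inAA => /andP[h1 h2].
have := hh_gt0 K => hp.
rewrite ler_norml; apply/andP; split; lra.
Qed.

Lemma WK_cvg x : (fun K => WK K x) @ \oo --> W x.
Proof.
apply/cvgrPdist_le => e e0.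
near=> K.
have hK : `|W x| <= K%:R by near: K; exact: nbhs_infty_ger.
have he : e^-1 <= K%:R by near: K; exact: nbhs_infty_ger.
apply: (le_trans (WK_close _)).
  by move: hK; rewrite ler_norml -natr1 => /andP[? ?]; apply/andP; split; lra.
rewrite /hh invf_ple ?posrE ?ltr0Sn // -natr1; lra.
Unshelve. all: by end_near.
Qed.

End Approx.


Section Dom.
Context d (T : measurableType d) (R : realType) (mu : {measure set T -> \bar R}).

Lemma int_dom (f g : T -> R) : measurable_fun setT f ->
  mu.-integrable setT (EFin \o g) -> (forall x, `|f x| <= `|g x|) ->
  mu.-integrable setT (EFin \o f).
Proof.
move=> mf ig h; apply: le_integrable ig => //.
  exact/measurable_realfun.measurable_EFinP.
by move=> x _; rewrite /comp !abse_EFin lee_fin.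
Qed.
End Dom.

Section CE.
Context d (T : measurableType d) (R : realType) (mu : {measure set T -> \bar R}).
Variables (G : set (set T)) (Y Zf W : T -> R).
Hypothesis GM : G `<=` measurable.
Hypothesis mW : G_measurable G W.
Hypothesis hZ : forall A, G A ->
  (\int[mu]_(x in A) (Zf x)%:E = \int[mu]_(x in A) (Y x)%:E)%E.

Lemma GAA K i : G (AA W K i).
Proof. by apply: mW; exact: measurable_itv. Qed.

Lemma mAA K i : measurable (AA W K i).
Proof. exact: GM (GAA K i). Qed.

Lemma mWm : measurable_fun setT W.
Proof. exact: Gmeas_meas GM mW. Qed.

Lemma mWK K : measurable_fun setT (WK W K).
Proof.
rewrite /WK; apply: measurable_sum => i.
apply: measurable_realfun.measurable_funM; first exact: measurable_cst.
exact: measurable_realfun.measurable_indic (mAA K i).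
Qed.

Lemma int_simple (V : T -> R) : mu.-integrable setT (EFin \o V) -> forall K,
  (\int[mu]_x (WK W K x * V x)%:E =
   \sum_(0 <= i < NN K) (aa K i)%:E * \int[mu]_(x in AA W K i) (V x)%:E)%E.
Proof.
move=> iV K.
have mV : measurable_fun setT V.
  by apply/measurable_realfun.measurable_EFinP; exact: measurable_int iV.
have iI : forall i, mu.-integrable setT (fun x => (\1_(AA W K i) x * V x)%:E).
  move=> i; apply: (int_dom _ iV).
    apply: measurable_realfun.measurable_funM => //.
    exact: measurable_realfun.measurable_indic (mAA K i).
  move=> x; rewrite normrM indicE; case: (x \in AA W K i); rewrite ?normr1 ?normr0 ?mul1r ?mul0r //.
transitivity (\int[mu]_x (\sum_(0 <= i < NN K) (aa K i)%:E * (\1_(AA W K i) x * V x)%:E))%E.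
  apply: eq_integral => x _; rewrite /WK big_distrl /= -sumEFin; apply: eq_bigr => i _.
  by rewrite -EFinM mulrA.
rewrite integral_sum //; last by move=> i; apply: integrableZl => //; exact: iI.
apply: eq_bigr => i _; rewrite integralZl //; congr (_ * _)%E.
rewrite [in RHS]integral_mkcond; apply: eq_integral => x _; rewrite /patch indicE.
by case: (x \in AA W K i); rewrite ?mul1r ?mul0r.
Qed.
Lemma dom_lim (V : T -> R) : mu.-integrable setT (EFin \o V) ->
  mu.-integrable setT (fun x => (W x * V x)%:E) ->
  (fun K => \int[mu]_x (WK W K x * V x)%:E)%E @ \oo --> (\int[mu]_x (W x * V x)%:E)%E.
Proof.
move=> iV iWV.
have mV : measurable_fun setT V.
  by apply/measurable_realfun.measurable_EFinP; exact: measurable_int iV.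
apply: (@dominated_cvg _ _ _ mu setT measurableT (fun K x => (WK W K x * V x)%:E)
  (fun x => (W x * V x)%:E) (fun x => (`|W x * V x| + `|V x|)%:E)).
- move=> K; apply/measurable_realfun.measurable_EFinP.
  by apply: measurable_realfun.measurable_funM => //; exact: mWK.
- move=> x _; apply: cvg_EFin; first exact: nearW.
  by apply: cvgMr_tmp; exact: WK_cvg.
- by [].
- have h1 := integrable_norm iWV; have h2 := integrable_norm iV.
  apply: (eq_integrable measurableT _ _ _ (integrableD measurableT h1 h2)).
  by move=> x _; rewrite /= EFinD.
- move=> K x _; rewrite abse_EFin lee_fin normrM.
  have := WK_bound W K x; have := normr_ge0 (V x); have := normr_ge0 (W x).
  by rewrite normrM; nra.
Qed.

Lemma ce_eq : mu.-integrable setT (EFin \o Y) -> mu.-integrable setT (EFin \o Zf) ->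
  mu.-integrable setT (fun x => (W x * Y x)%:E) ->
  mu.-integrable setT (fun x => (W x * Zf x)%:E) ->
  (\int[mu]_x (W x * Y x)%:E = \int[mu]_x (W x * Zf x)%:E)%E.
Proof.
move=> iY iZ iWY iWZ.
have h1 := dom_lim iY iWY; have h2 := dom_lim iZ iWZ.
have e : (fun K => \int[mu]_x (WK W K x * Y x)%:E)%E = (fun K => \int[mu]_x (WK W K x * Zf x)%:E)%E.
  apply/funext => K; rewrite !int_simple //; apply: eq_bigr => i _.
  by rewrite hZ //; exact: GAA.
rewrite e in h1.
exact: (cvg_unique _ h1 h2).
Qed.
End CE.


Section L2.
Context d (T : measurableType d) (R : realType) (P : probability T R).

Lemma normK (y : R) : `|y| ^+ 2 = y ^+ 2.
Proof. exact: real_normK (num_real y). Qed.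

Definition L2 (f : T -> R) := measurable_fun setT f /\ P.-integrable setT (fun x => (f x ^+ 2)%:E).

Lemma intD (f g : T -> R) : P.-integrable setT (EFin \o f) -> P.-integrable setT (EFin \o g) ->
  P.-integrable setT (EFin \o (fun x => f x + g x)).
Proof.
move=> hf hg; apply: (eq_integrable measurableT _ _ _ (integrableD measurableT hf hg)).
by move=> x _; rewrite /= EFinD.
Qed.

Lemma intZ (f : T -> R) k : P.-integrable setT (EFin \o f) ->
  P.-integrable setT (EFin \o (fun x => k * f x)).
Proof.
move=> hf; apply: (eq_integrable measurableT _ _ _ (integrableZl measurableT k hf)).
by move=> x _; rewrite /= EFinM.
Qed.

Lemma intSum (I : Type) (r : seq I) (f : I -> T -> R) :
  (forall i, P.-integrable setT (EFin \o f i)) ->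
  P.-integrable setT (EFin \o (fun x => \sum_(i <- r) f i x)).
Proof.
move=> hf; elim: r => [|i r IH].
  apply: (eq_integrable measurableT _ _ _ (finite_measure_integrable_cst P 0 measurableT)).
  by move=> x _; rewrite /= big_nil.
apply: (eq_integrable measurableT _ _ _ (intD (hf i) IH)).
by move=> x _; rewrite /= big_cons.
Qed.

Lemma L2_int f : L2 f -> P.-integrable setT (EFin \o f).
Proof.
move=> [mf i2]; apply: (int_dom mf (intD i2 (finite_measure_integrable_cst P 1 measurableT))).
move=> x; rewrite /cst (@ger0_norm _ (_ + 1)); last by have := sqr_ge0 (f x); lra.
have := normr_ge0 (f x); rewrite -[f x ^+ 2]normK; nra.
Qed.

Lemma L2D f g : L2 f -> L2 g -> L2 (fun x => f x + g x).
Proof.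
move=> [mf hf] [mg hg]; split; first exact: measurable_realfun.measurable_funD.
have i2 := intD (intZ 2 hf) (intZ 2 hg).
apply: (int_dom _ i2).
  apply: measurable_realfun.measurable_funX; exact: measurable_realfun.measurable_funD.
move=> x; rewrite ger0_norm ?sqr_ge0 // ger0_norm; last by have := sqr_ge0 (f x); have := sqr_ge0 (g x); lra.
have := sqr_ge0 (f x - g x); lra.
Qed.

Lemma L2Z f k : L2 f -> L2 (fun x => k * f x).
Proof.
move=> [mf hf]; split.
  by apply: measurable_realfun.measurable_funM => //; exact: measurable_cst.
apply: (eq_integrable measurableT _ _ _ (intZ (k ^+ 2) hf)).
by move=> x _; rewrite /= exprMn.
Qed.

Lemma L2M f g : L2 f -> L2 g -> P.-integrable setT (EFin \o (fun x => f x * g x)).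
Proof.
move=> [mf hf] [mg hg].
apply: (int_dom _ (intD hf hg)); first exact: measurable_realfun.measurable_funM.
move=> x; rewrite [X in _ <= X]ger0_norm; last by have := sqr_ge0 (f x); have := sqr_ge0 (g x); lra.
rewrite normrM -[f x ^+ 2]normK -[g x ^+ 2]normK.
have := sqr_ge0 (`|f x| - `|g x|); have := normr_ge0 (f x); have := normr_ge0 (g x); nra.
Qed.

Lemma L2_dom (f g : T -> R) : measurable_fun setT f -> L2 g -> (forall x, `|f x| <= `|g x|) -> L2 f.
Proof.
move=> mf [mg hg] h; split => //.
apply: (int_dom _ hg); first exact: measurable_realfun.measurable_funX.
move=> x; rewrite !ger0_norm ?sqr_ge0 // -[f x ^+ 2]normK -[g x ^+ 2]normK.
have := h x; have := normr_ge0 (f x); nra.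
Qed.
End L2.


Section Main.
Context (d : measure_display) (T : measurableType d) (R : realType)
  (P : probability T R) (X : int -> T -> R) (F : int -> set (set T))
  (Z : nat -> T -> R) (n : nat).
Hypothesis hF : filtration F.
Hypothesis hX : forall i, G_measurable (F i) (X i).
Hypothesis hX2 : forall i, P.-integrable setT (fun x => ((X i x) ^+ 2)%:E).

Lemma mX i : measurable_fun setT (X i).
Proof. exact: Gmeas_meas ((hF.1 i).2) (hX i). Qed.

Lemma L2X i : L2 P (X i).
Proof. by split; [exact: mX|exact: hX2]. Qed.

Lemma L2psum k : L2 P (psum X k).
Proof.
elim: k => [|k IH].
  rewrite (_ : psum X 0 = fun _ => 0); last by apply/funext => x; rewrite psum0.
  apply: (@L2_dom _ _ _ P _ (X 0) (measurable_cst _) (L2X 0)) => x.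
  by rewrite normr0.
rewrite (_ : psum X k.+1 = fun x => psum X k x + X k.+1%:Z x); last by apply/funext => x; rewrite psumS.
exact: L2D IH (L2X _).
Qed.

Lemma WW_le' j x : `|WW X j x| <= 8 * `|X j%:Z x|.
Proof.
case: j => [|j]; last exact: WW_le.
by rewrite /WW /= subrr normr0 mulr_ge0.
Qed.

Lemma L2WW j : L2 P (WW X j).
Proof.
apply: (@L2_dom _ _ _ P _ (fun x => 8 * X j%:Z x)).
- by apply: (@mWW _ _ _ X j _ j (leqnn j)) => i _; exact: mX.
- exact: L2Z (L2X _).
- by move=> x; rewrite normrM (@ger0_norm _ 8) //; exact: WW_le'.
Qed.

Lemma L2Y j : L2 P (fun x => psum X n x - psum X j x).
Proof.
rewrite (_ : (fun x => _) = fun x => psum X n x + (-1) * psum X j x); last first.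
  by apply/funext => x; rewrite mulN1r.
exact: L2D (L2psum n) (L2Z _ (L2psum j)).
Qed.

Lemma intWY j : P.-integrable setT (fun x => (WW X j x * (psum X n x - psum X j x))%:E).
Proof. exact: L2M (L2WW j) (L2Y j). Qed.

Lemma key j : is_cond_exp P (F j%:Z) (fun x => psum X n x - psum X j x) (Z j) ->
  (\int[P]_x (WW X j x * (psum X n x - psum X j x))%:E <=
   8%:E * \int[P]_x (`|X j%:Z x * Z j x|)%:E)%E.
Proof.
move=> [hZm hZi hZe].
have sF := (hF.1 j%:Z).1; have GM := (hF.1 j%:Z).2.
have mZ : measurable_fun setT (Z j) := Gmeas_meas GM hZm.
have mXZ : measurable_fun setT (fun x => X j%:Z x * Z j x).
  exact: measurable_realfun.measurable_funM (mX _) mZ.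
have mWW' : measurable_fun setT (WW X j).
  by apply: (@mWW _ _ _ X j _ j (leqnn j)) => i _; exact: mX.
have mWZ : measurable_fun setT (fun x => WW X j x * Z j x).
  exact: measurable_realfun.measurable_funM mWW' mZ.
case: (pselect (P.-integrable setT (fun x => (WW X j x * Z j x)%:E))) => iWZ; last first.
  have hinf : (\int[P]_x (`|X j%:Z x * Z j x|)%:E = +oo)%E.
    apply/eqP; apply/negPn/negP; rewrite -ltey => hlt.
    apply: iWZ.
    have iXZ : P.-integrable setT (EFin \o (fun x => X j%:Z x * Z j x)).
      apply/integrableP; split; first exact/measurable_realfun.measurable_EFinP.
      suff -> : (\int[P]_x `|(EFin \o (fun x => (X j%:Z x * Z j x)%R)) x|)%E =
        (\int[P]_x (`|X j%:Z x * Z j x|%R)%:E)%E by [].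
      by apply: eq_integral => x _; rewrite /comp abse_EFin.
    apply: (int_dom mWZ (intZ 8 iXZ)) => x.
    rewrite !normrM (@ger0_norm _ 8) // mulrA ler_wpM2r //.
    exact: WW_le'.
  by rewrite hinf muleC gt0_mulye ?lte_fin // leey.
have mW : G_measurable (F j%:Z) (WW X j).
  apply/(Gmeas_alias _ sF).
  apply: (@mWW _ (g_sigma_algebraType (F j%:Z)) R X j _ j (leqnn j)).
  move=> i /andP[_ hi]; apply/(Gmeas_alias _ sF).
  move=> B mB; apply: (hF.2 i%:Z j%:Z); first by rewrite lez_nat.
  exact: hX.
rewrite (ce_eq GM mW hZe (L2_int (L2Y j)) hZi (intWY j) iWZ).
apply: (le_trans (lee_abs _)).
apply: (le_trans (le_abse_integral _ _ _)) => //.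
  exact/measurable_realfun.measurable_EFinP.
rewrite -ge0_integralZl_EFin //; last first.
  by apply/measurable_realfun.measurable_EFinP; apply: measurableT_comp.
apply: ge0_le_integral => //.
- exact: measurable_int (integrable_abse iWZ).
- apply: emeasurable_funM; first exact: measurable_cst.
  apply/measurable_realfun.measurable_EFinP; exact: measurableT_comp.
- move=> x _; rewrite abse_EFin -EFinM lee_fin !normrM mulrA ler_wpM2r //.
  exact: WW_le'.
Qed.

Definition RHSf x := 4 * (\sum_(1 <= i < n.+1) X i%:Z x ^+ 2) +
  \sum_(1 <= j < n) WW X j x * (psum X n x - psum X j x).

Lemma iRHS : P.-integrable setT (EFin \o RHSf).
Proof.
apply: intD; first by apply: intZ; apply: intSum => i; exact: hX2.
by apply: intSum => j; exact: intWY.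
Qed.

Lemma ineq1 : (\int[P]_x ((pmax X n x) ^+ 2)%:E <= \int[P]_x (RHSf x)%:E)%E.
Proof.
have hp x : pmax X n x ^+ 2 <= RHSf x by exact: pathwise.
have mp : measurable_fun setT (pmax X n).
  by apply: (@mpmax _ _ _ X n _ n (leqnn n)) => i _; exact: mX.
have ip : P.-integrable setT (EFin \o (fun x => pmax X n x ^+ 2)).
  apply: (int_dom _ iRHS).
    exact: measurable_realfun.measurable_funX.
  move=> x; rewrite ger0_norm ?sqr_ge0 //; apply: (le_trans (hp x)).
  exact: ler_norm.
apply: le_integral => //; first exact: iRHS.
by move=> x _; rewrite lee_fin.
Qed.

Lemma eq2 : (\int[P]_x (RHSf x)%:E =
  4%:E * (\sum_(1 <= k < n.+1) \int[P]_x ((X k%:Z x) ^+ 2)%:E) +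
  \sum_(1 <= j < n) \int[P]_x (WW X j x * (psum X n x - psum X j x))%:E)%E.
Proof.
have i1 : P.-integrable setT (EFin \o (fun x => 4 * \sum_(1 <= i < n.+1) X i%:Z x ^+ 2)).
  by apply: intZ; apply: intSum => i; exact: hX2.
have i2 : P.-integrable setT (EFin \o (fun x => \sum_(1 <= j < n) WW X j x * (psum X n x - psum X j x))).
  by apply: intSum => j; exact: intWY.
rewrite /RHSf.
under eq_integral do rewrite EFinD.
rewrite integralD //.
congr (_ + _)%E.
  under eq_integral do rewrite EFinM.
  rewrite integralZl //; last first.
    by apply: intSum => i; exact: hX2.
  congr (_ * _)%E.
  under eq_integral do rewrite -sumEFin.
  by rewrite integral_sum // => i; exact: hX2.
under eq_integral do rewrite -sumEFin.
by rewrite integral_sum // => j; exact: intWY.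
Qed.

End Main.


Unset Implicit Arguments.

Theorem corollary6 (d : measure_display) (T : measurableType d) (R : realType)
  (P : probability T R) (X : int -> T -> R) (F : int -> set (set T))
  (Z : nat -> T -> R) (n : nat) :
  filtration F ->
  (forall i, G_measurable (F i) (X i)) ->
  (forall i, P.-integrable setT (fun x => ((X i x) ^+ 2)%:E)) ->
  (1 <= n)%N ->
  (forall k : nat, (1 <= k < n)%N ->
     is_cond_exp P (F k%:Z) (fun x => psum X n x - psum X k x) (Z k)) ->
  (\int[P]_x ((pmax X n x) ^+ 2)%:E <=
     4%:E * (\sum_(1 <= k < n.+1) \int[P]_x ((X k%:Z x) ^+ 2)%:E)
     + 12%:E * (\sum_(1 <= k < n) \int[P]_x (`|X k%:Z x * Z k x|)%:E))%E.
Proof.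
move=> hF hX hX2 hn hZ.
apply: (le_trans (ineq1 n hF hX hX2)).
rewrite (eq2 n hF hX hX2).
apply: leeD; first exact: lexx.
have h0 : (0 <= \sum_(1 <= k < n) \int[P]_x (`|X k%:Z x * Z k x|)%:E)%E.
  by apply: sume_ge0 => k _; apply: integral_ge0 => x _; rewrite lee_fin.
apply: (@le_trans _ _ (8%:E * (\sum_(1 <= k < n) \int[P]_x (`|X k%:Z x * Z k x|)%:E))%E); last first.
  by apply: lee_wpmul2r => //; rewrite lee_fin ler_nat.
rewrite ge0_sume_distrr; last by move=> k _; apply: integral_ge0 => x _; rewrite lee_fin.
rewrite big_seq [X in (_ <= X)%E]big_seq.
apply: lee_sum => k; rewrite mem_index_iota => hk.
exact: (key hF hX hX2 (hZ k hk)).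
Qed.
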